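(* Let $\mathcal M=\langle Q,R,f,\mathcal I\rangle$ be a monotonic automaton with $Q\cap R=\varnothing$, and let $\langle q_0,S_0\rangle$ be a configuration. Treat elements of $Q\cup R$ as propositional variables and let $\Gamma$ be the set of implicational formulas consisting of: all atoms in $S_0\cup\{f\}$; for each instruction $q:\ \mathsf{check}\ \{s^1_1,\ldots,s^k_1\};\ \mathsf{set}\ \{s^1_2,\ldots,s^\ell_2\};\ \mathsf{jmp}\ p$ the formula $s^1_1\to\cdots\to s^k_1\to(s^1_2\to\cdots\to s^\ell_2\to p)\to q$; and for each instruction $q:\ \mathsf{jmp}\ p_1\ \mathsf{and}\ p_2$ the formula $p_1\to p_2\to q$. Then $\langle q_0,S_0\rangle$ is accepting if and only if $\Gamma\vdash q_0$ in intuitionistic implicational logic. Moreover every formula in $\Gamma$ has order at most two, so $\Gamma\to q_0$ has order at most three.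
   Context: A monotonic automaton is $\mathcal M=\langle Q,R,f,\mathcal I\rangle$ where $Q$ is a finite set of states with final state $f\in Q$, $R$ is a finite set of registers, and $\mathcal I$ is a finite set of instructions, each of the form (1) $q:\ \mathsf{check}\ S_1;\ \mathsf{set}\ S_2;\ \mathsf{jmp}\ p$, or (2) $q:\ \mathsf{jmp}\ p_1\ \mathsf{and}\ p_2$, with $q,p,p_1,p_2\in Q$ and $S_1,S_2\subseteq R$. A configuration is a pair $\langle q,S\rangle$ with $q\in Q$, $S\subseteq R$. An instruction of type (1) at state $q$ leads from $\langle q,S\rangle$ to $\langle p,S\cup S_2\rangle$ provided $S_1\subseteq S$; an instruction of type (2) at $q$ leads from $\langle q,S\rangle$ to both $\langle p_1,S\rangle$ and $\langle p_2,S\rangle$. The set of accepting configurations is the least set such that: $\langle f,S\rangle$ is accepting; $\langle q,S\rangle$ is accepting if some type (1) instruction at $q$ applies and leads to an accepting configuration; $\langle q,S\rangle$ is accepting if some type (2) instruction at $q$ leads to two configurations $\langle p_1,S\rangle,\langle p_2,S\rangle$ that are both accepting. Intuitionistic implicational logic (IIPC) has formulas built from propositional variables by $\to$ only (right-associative), with provability given by natural deduction (simply typed lambda calculus). For a finite set $\Gamma=\{\varphi_1,\ldots,\varphi_n\}$, $\Gamma\to p$ denotes $\varphi_1\to\cdots\to\varphi_n\to p$. Order: an atom has order $0$, and $r(\sigma\to\tau)=\max(r(\tau),r(\sigma)+1)$. *)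

(* Defs.v *)
From mathcomp Require Import all_boot.
From Stdlib Require List.
Set Implicit Arguments. Unset Strict Implicit. Unset Printing Implicit Defensive.

Section Automata.
Variables (Q R : finType).

Inductive instr : Type :=
| ICheck (q : Q) (S1 S2 : {set R}) (p : Q)
| IFork (q : Q) (p1 p2 : Q).

(* M = <Q, R, f, I>; Q and R are the carrier finTypes, the instruction set
   I is a finite set given as a list. *)
Record automaton : Type := Automaton {
  final : Q;
  instrs : seq instr }.

Inductive accepting (M : automaton) : Q -> {set R} -> Prop :=
| acc_final : forall S : {set R}, accepting M (final M) S
| acc_check : forall q (S1 S2 : {set R}) p (S : {set R}),
    List.In (ICheck q S1 S2 p) (instrs M) -> S1 \subset S ->
    accepting M p (S :|: S2) -> accepting M q S
| acc_fork : forall q p1 p2 (S : {set R}),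
    List.In (IFork q p1 p2) (instrs M) ->
    accepting M p1 S -> accepting M p2 S -> accepting M q S.
End Automata.

Inductive form (A : Type) : Type :=
| Var (a : A)
| Imp (phi psi : form A).
Arguments Var {A} a.
Arguments Imp {A} phi psi.

Inductive ND {A : Type} : seq (form A) -> form A -> Prop :=
| nd_ax : forall G phi, List.In phi G -> ND G phi
| nd_intro : forall G phi psi, ND (phi :: G) psi -> ND G (Imp phi psi)
| nd_elim : forall G phi psi, ND G (Imp phi psi) -> ND G phi -> ND G psi.

Fixpoint form_order {A : Type} (phi : form A) : nat :=
  match phi with
  | Var _ => 0
  | Imp s t => maxn (form_order t) (form_order s).+1
  end.

Definition imps {A : Type} (G : seq (form A)) (tau : form A) : form A :=
  foldr Imp tau G.

Section Encoding.
Variables (Q R : finType).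
(* Propositional variables are the elements of Q ∪ R, with Q ∩ R = ∅:
   modelled as the disjoint sum Q + R. *)
Definition atQ (q : Q) : form (Q + R) := Var (inl q).
Definition atR (r : R) : form (Q + R) := Var (inr r).

Definition instr_formula (i : instr Q R) : form (Q + R) :=
  match i with
  | ICheck q S1 S2 p =>
      imps [seq atR s | s <- enum S1]
           (Imp (imps [seq atR s | s <- enum S2] (atQ p)) (atQ q))
  | IFork q p1 p2 => Imp (atQ p1) (Imp (atQ p2) (atQ q))
  end.

Definition Gamma (M : automaton Q R) (S0 : {set R}) : seq (form (Q + R)) :=
  [seq atR s | s <- enum S0] ++ [:: atQ (final M)]
  ++ [seq instr_formula i | i <- instrs M].
End Encoding.

(* Main.v *)
Require Import Defs.
From mathcomp Require Import all_boot.
From Stdlib Require List.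

Set Implicit Arguments. Unset Strict Implicit. Unset Printing Implicit Defensive.

Lemma In_mem (T : eqType) (x : T) (s : seq T) : List.In x s <-> x \in s.
Proof.
elim: s => [|a s IH] //=; rewrite in_cons; split.
- by case=> [->|/IH ->]; rewrite ?eqxx ?orbT.
- by case/orP=> [/eqP ->|/IH]; [left|right].
Qed.

Lemma In_map (A B : Type) (f : A -> B) x (l : seq A) :
  List.In x l -> List.In (f x) (map f l).
Proof. elim: l => [|a l IH] //= [->|H]; [by left|right; auto]. Qed.

Lemma In_map_inv (A B : Type) (f : A -> B) y (l : seq A) :
  List.In y (map f l) -> exists x, List.In x l /\ y = f x.
Proof.
elim: l => [|a l IH] //= [<-|/IH [x [H1 H2]]]; first by exists a; split; [left|].
by exists x; split; [right|].
Qed.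

Lemma In_cat (A : Type) x (l1 l2 : seq A) :
  List.In x (l1 ++ l2) <-> List.In x l1 \/ List.In x l2.
Proof.
elim: l1 => [|a l IH] /=; first by split; [right|case].
split.
- by case=> [->|/IH [H|H]]; [left; left|left; right|right].
- by case=> [[->|H]|H]; [left|right; apply/IH; left|right; apply/IH; right].
Qed.

Lemma In_catrev (A : Type) x (l acc : seq A) :
  List.In x l \/ List.In x acc -> List.In x (catrev l acc).
Proof.
elim: l acc => [|a l IH] acc /=; first by case.
move=> H; apply: IH; case: H => [[->|H]|H]; by [right; left|left|right; right].
Qed.

Lemma In_rev (A : Type) x (l : seq A) : List.In x l -> List.In x (rev l).
Proof. by move=> H; apply: In_catrev; left. Qed.

Section Proof.
Variables (Q R : finType) (M : automaton Q R).

Lemma imps_elim (G : seq (form (Q + R))) l t :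
  (forall x, List.In x l -> ND G x) -> ND G (imps l t) -> ND G t.
Proof.
elim: l => [|a l IH] //= Hl H; apply: IH.
- by move=> x Hx; apply: Hl; right.
- by apply: nd_elim H _; apply: Hl; left.
Qed.

Lemma imps_intro l : forall (G : seq (form (Q + R))) t,
  ND (rev l ++ G) t -> ND G (imps l t).
Proof.
elim: l => [|a l IH] //= G t H; apply: nd_intro; apply: IH.
by move: H; rewrite rev_cons -cats1 -catA.
Qed.

Lemma acc_to_ND q S : accepting M q S -> forall G : seq (form (Q + R)),
  List.In (atQ R (final M)) G ->
  (forall i, List.In i (instrs M) -> List.In (instr_formula i) G) ->
  (forall s, s \in S -> List.In (atR Q s) G) ->
  ND G (atQ R q).
Proof.
elim=> {q S}.
- by move=> S G Hf _ _; apply: nd_ax.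
- move=> q S1 S2 p S Hin Hsub _ IH G Hf Hi HS.
  have := Hi _ Hin => /= H.
  apply: (@nd_elim _ _ (imps [seq atR Q s | s <- enum S2] (atQ R p))).
  + apply: (imps_elim _ (nd_ax H)).
    move=> x Hx; case: (In_map_inv Hx) => s [/In_mem Hs ->]; apply: nd_ax; apply: HS.
    by apply: (subsetP Hsub); rewrite mem_enum in Hs.
  + apply: imps_intro; apply: IH.
    * by apply/In_cat; right.
    * by move=> i Hi'; apply/In_cat; right; apply: Hi.
    * move=> s; rewrite in_setU => /orP [Hs|Hs]; apply/In_cat; [right; exact: HS|left].
      apply: In_rev; apply: In_map; apply/In_mem; by rewrite mem_enum.
- move=> q p1 p2 S Hin _ IH1 _ IH2 G Hf Hi HS.
  have := Hi _ Hin => /= H.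
  apply: nd_elim (IH2 G Hf Hi HS); apply: nd_elim (IH1 G Hf Hi HS).
  exact: nd_ax.
Qed.

Lemma acc_mono q S : accepting M q S -> forall S' : {set R}, S \subset S' -> accepting M q S'.
Proof.
elim=> {q S}.
- by move=> S S' _; apply: acc_final.
- move=> q S1 S2 p S Hin Hsub _ IH S' HS'.
  apply: (acc_check Hin); first exact: subset_trans Hsub HS'.
  by apply: IH; apply: setSU.
- move=> q p1 p2 S Hin _ IH1 _ IH2 S' HS'.
  by apply: (acc_fork Hin); [apply: IH1|apply: IH2].
Qed.

Fixpoint forces (S : {set R}) (phi : form (Q + R)) : Prop :=
  match phi with
  | Var (inl q) => accepting M q S
  | Var (inr r) => r \in S
  | Imp a b => forall S' : {set R}, S \subset S' -> forces S' a -> forces S' b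
  end.

Lemma forces_mono phi (S S' : {set R}) : S \subset S' -> forces S phi -> forces S' phi.
Proof.
case: phi => [[q|r]|a b] /= Hs.
- by move=> H; apply: acc_mono H _ Hs.
- by move=> H; apply: (subsetP Hs).
- by move=> H S'' Hs'; apply: H; apply: subset_trans Hs Hs'.
Qed.

Lemma soundness G phi : ND G phi -> forall S,
  (forall psi, List.In psi G -> forces S psi) -> forces S phi.
Proof.
elim=> {G phi}.
- by move=> G phi Hin S H; apply: H.
- move=> G phi psi _ IH S H /= S' HS' Hphi; apply: IH.
  by move=> x [<-|Hx] //; apply: forces_mono HS' (H _ Hx).
- move=> G phi psi _ IH1 _ IH2 S H.
  by apply: (IH1 S H S (subxx _)); apply: IH2.
Qed.

Lemma forces_imps_intro l t (S : {set R}) :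
  (forall S' : {set R}, S \subset S' -> (forall x, List.In x l -> forces S' x) -> forces S' t) ->
  forces S (imps l t).
Proof.
elim: l S => [|a l IH] S /= H; first by apply: H => //; apply: subxx.
move=> S' HS' Ha; apply: IH => S'' HS'' Hl; apply: H.
- exact: subset_trans HS' HS''.
- by move=> x [<-|Hx]; [apply: forces_mono HS'' Ha|apply: Hl].
Qed.

Lemma forces_imps_elim l t S :
  forces S (imps l t) -> (forall x, List.In x l -> forces S x) -> forces S t.
Proof.
elim: l => [|a l IH] //= H Hl; apply: IH.
- by apply: H (subxx _) _; apply: Hl; left.
- by move=> x Hx; apply: Hl; right.
Qed.

Lemma Gamma_forced S0 psi : List.In psi (Gamma M S0) -> forces S0 psi.
Proof.
rewrite /Gamma => /In_cat [H|/In_cat [[<-|//]|H]].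
- case: (In_map_inv H) => s [/In_mem Hs ->] /=; by rewrite mem_enum in Hs.
- exact: acc_final.
- case: (In_map_inv H) => [[q S1 S2 p|q p1 p2]] [Hin ->] /=.
  + apply: forces_imps_intro => S' _ HS1 /= S'' HS'' Hp.
    apply: (acc_check Hin).
    * apply/subsetP => s Hs; apply: (subsetP HS'').
      have := HS1 (atR Q s); apply; apply: In_map; apply/In_mem; by rewrite mem_enum.
    * apply: (forces_imps_elim (l := [seq atR Q s | s <- enum S2]) (t := atQ R p)).
      - by apply: forces_mono Hp; apply: subsetUl.
      - move=> x Hx; case: (In_map_inv Hx) => s [/In_mem Hs ->] /=.
        by rewrite mem_enum in Hs; rewrite in_setU Hs orbT.
  + move=> S' _ H1 S'' H2 H3; apply: (acc_fork Hin) => //.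
    by apply: acc_mono H1 _ H2.
Qed.

Lemma order_imps (l : seq (form (Q + R))) t n :
  (forall x, List.In x l -> form_order x <= n) -> form_order t <= n.+1 ->
  form_order (imps l t) <= n.+1.
Proof.
elim: l => [|a l IH] //= Hl Ht; rewrite geq_max ltnS; apply/andP; split.
- by apply: IH => // x Hx; apply: Hl; right.
- by apply: Hl; left.
Qed.

End Proof.

Theorem lemma3p9 (Q R : finType) (M : automaton Q R) (q0 : Q) (S0 : {set R}) :
  (accepting M q0 S0 <-> ND (Gamma M S0) (atQ R q0)) /\
  (forall phi, List.In phi (Gamma M S0) -> form_order phi <= 2) /\
  form_order (imps (Gamma M S0) (atQ R q0)) <= 3.
Proof.
have Hord : forall phi, List.In phi (Gamma M S0) -> form_order phi <= 2.
  rewrite /Gamma => phi /In_cat [H|/In_cat [[<-|//]|H]].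
  - by case: (In_map_inv H) => s [_ ->].
  - by [].
  - case: (In_map_inv H) => [[q S1 S2 p|q p1 p2]] [_ ->] //=.
    apply: order_imps.
    + by move=> x Hx; case: (In_map_inv Hx) => s [_ ->].
    + rewrite /= geq_max /= ltnS; apply: (order_imps (n := 0)) => //.
      by move=> x Hx; case: (In_map_inv Hx) => s [_ ->].
split; last split => //.
- split.
  + move=> H; apply: (acc_to_ND H).
    * by apply/In_cat; right; left.
    * by move=> i Hi; apply/In_cat; right; right; apply: In_map.
    * by move=> s Hs; apply/In_cat; left; apply: In_map; apply/In_mem; rewrite mem_enum.
  + move=> H; apply: (soundness H) => psi; exact: Gamma_forced.
- by apply: order_imps.
Qed.
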